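(* For every $\varepsilon>0$ there exists $\delta>0$, depending only on $\varepsilon$, such that the following holds for all sufficiently large $N_0$. If $G$ is a bichromatic graph whose underlying graph is the complete bipartite graph $K_{N_0,N_0}$ and $G$ is $\varepsilon$-color-balanced, then at least one of the left vertex-pair incidence graph $H_L$ and the right vertex-pair incidence graph $H_R$ of $G$ has at least $\delta N_0^3$ edges.
   Context: A bichromatic graph is a triple $G=(V,R,B)$ with $R,B\subseteq\binom{V}{2}$, $R\cap B=\emptyset$ (red and blue edges); its underlying graph is $(V,R\cup B)$. $d_R(G)=|R|/(|R|+|B|)$, and $G$ is $\varepsilon$-color-balanced if $\varepsilon\le d_R(G)\le 1-\varepsilon$. For a bipartite bichromatic graph $G$ with bipartition $V=V_1\sqcup V_2$, the left vertex-pair incidence graph $H_L$ is the bipartite graph with vertex set $V_1\sqcup\binom{V_2}{2}$ in which $u\in V_1$ is adjacent to $\{v_1,v_2\}\in\binom{V_2}{2}$ if and only if $uv_1$ and $uv_2$ are both edges of $G$ and they have different colours. The right vertex-pair incidence graph $H_R$ is defined in the same way with the roles of $V_1$ and $V_2$ swapped (vertex set $V_2\sqcup\binom{V_1}{2}$). *)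

(* Defs.v *)
From mathcomp Require Import all_boot all_order all_algebra.
Set Implicit Arguments. Unset Strict Implicit. Unset Printing Implicit Defensive.
Import Order.TTheory GRing.Theory Num.Theory.

(* A bichromatic graph whose underlying graph is the complete bipartite graph
   K_{N,N}, with bipartition V1 = 'I_N (left) and V2 = 'I_N (right):
   every pair (u,v) in V1 x V2 is an edge, coloured red iff [col u v] = true,
   blue otherwise. *)
Definition bicol_KNN (N : nat) := 'I_N -> 'I_N -> bool.

Definition num_red N (col : bicol_KNN N) : nat :=
  #|[set uv : 'I_N * 'I_N | col uv.1 uv.2]|.

(* red density d_R(G) = |R| / (|R| + |B|) ; here |R| + |B| = N^2 *)
Definition red_density (R : numFieldType) N (col : bicol_KNN N) : R :=
  ((num_red col)%:R / (N * N)%:R)%R.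

Definition color_balanced (R : numFieldType) (eps : R) N (col : bicol_KNN N) :=
  (eps <= red_density R col <= 1 - eps)%R.

(* Edges of the left vertex-pair incidence graph H_L: pairs (u, {v1,v2}),
   u in V1, {v1,v2} an unordered pair of distinct vertices of V2 (encoded as
   v1 < v2), such that uv1 and uv2 have different colours. *)
Definition HL_edges N (col : bicol_KNN N) : {set 'I_N * ('I_N * 'I_N)} :=
  [set t : 'I_N * ('I_N * 'I_N) | (t.2.1 < t.2.2)%N && (col t.1 t.2.1 != col t.1 t.2.2)].

Definition HR_edges N (col : bicol_KNN N) : {set 'I_N * ('I_N * 'I_N)} :=
  [set t : 'I_N * ('I_N * 'I_N) | (t.2.1 < t.2.2)%N && (col t.2.1 t.1 != col t.2.2 t.1)].

(* Main.v *)
Require Import Defs.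
From mathcomp Require Import all_boot all_order all_algebra.
From mathcomp Require Import ring lra.
Import Order.TTheory GRing.Theory Num.Theory.

Lemma card_setE (T : finType) (P : pred T) : #|[set t | P t]| = \sum_t (P t : nat).
Proof. rewrite -sum1_card big_mkcond /=; apply: eq_bigr => t _; rewrite inE; by case: (P t). Qed.

Lemma card_HL N (col : bicol_KNN N) : #|HL_edges col| =
  \sum_(u : 'I_N) \sum_(i : 'I_N) \sum_(j : 'I_N) (((i < j)%N && (col u i != col u j)) : nat).
Proof.
rewrite /HL_edges card_setE.
rewrite -(pair_bigA _ (fun u (p : 'I_N * 'I_N) => (((p.1 < p.2)%N && (col u p.1 != col u p.2)) : nat))) /=.
apply: eq_bigr => u _.
by rewrite -(pair_bigA _ (fun i j : 'I_N => (((i < j)%N && (col u i != col u j)) : nat))).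
Qed.

Lemma card_HR N (col : bicol_KNN N) : #|HR_edges col| =
  \sum_(v : 'I_N) \sum_(i : 'I_N) \sum_(j : 'I_N) (((i < j)%N && (col i v != col j v)) : nat).
Proof.
rewrite /HR_edges card_setE.
rewrite -(pair_bigA _ (fun u (p : 'I_N * 'I_N) => (((p.1 < p.2)%N && (col p.1 u != col p.2 u)) : nat))) /=.
apply: eq_bigr => u _.
by rewrite -(pair_bigA _ (fun i j : 'I_N => (((i < j)%N && (col i u != col j u)) : nat))).
Qed.

Lemma card_red N (col : bicol_KNN N) : num_red col = \sum_(u : 'I_N) \sum_(v : 'I_N) (col u v : nat).
Proof. by rewrite /num_red card_setE -(pair_bigA _ (fun u v : 'I_N => (col u v : nat))). Qed.

Lemma pairs_le N (f : 'I_N -> bool) :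
  (\sum_(i : 'I_N) \sum_(j : 'I_N) ((f i != f j) : nat) <= 2 * \sum_(i : 'I_N) \sum_(j : 'I_N) (((i < j)%N && (f i != f j)) : nat))%N.
Proof.
rewrite mul2n -addnn.
rewrite [X in (_ <= _ + X)%N]exchange_big /=.
rewrite -big_split /=; apply: leq_sum => i _; rewrite -big_split /=; apply: leq_sum => j _.
case: (ltngtP i j) => [_|_|/val_inj ->] /=; try by case: (f i); case: (f j).
Qed.

Lemma cN N k : (\sum_(u : 'I_N) k = N * k)%N.
Proof. by rewrite sum_nat_const card_ord. Qed.

Lemma key N (col : bicol_KNN N) :
  (num_red col * (N * N - num_red col) <= 2 * N * (#|HL_edges col| + #|HR_edges col|))%N.
Proof.
set r := num_red col.
have Hb : (N * N - r = \sum_u \sum_v (~~ col u v : nat))%N.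
  have : (N * N = r + \sum_u \sum_v (~~ col u v : nat))%N.
    rewrite /r card_red -big_split /=. idtac.
    rewrite -(cN N N); apply: eq_bigr => u _.
    rewrite -big_split /= -[LHS]muln1 -(cN N 1); apply: eq_bigr => v _.
    by case: (col u v).
  by move=> ->; rewrite addKn.
rewrite Hb /r card_red big_distrl /=.
apply: (@leq_trans (\sum_u \sum_v \sum_u' \sum_v'
   (((col u v != col u v') : nat) + ((col u v' != col u' v') : nat)))).
  apply: leq_sum => u _; rewrite big_distrl /=; apply: leq_sum => v _.
  rewrite big_distrr /=; apply: leq_sum => u' _; rewrite big_distrr /=; apply: leq_sum => v' _.
  by case: (col u v); case: (col u v'); case: (col u' v').
pose A := \sum_(u : 'I_N) \sum_(v : 'I_N) \sum_(u' : 'I_N) \sum_(v' : 'I_N) ((col u v != col u v') : nat).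
pose B := \sum_(u : 'I_N) \sum_(v : 'I_N) \sum_(u' : 'I_N) \sum_(v' : 'I_N) ((col u v' != col u' v') : nat).
apply: (@leq_trans (A + B)).
  apply: eq_leq; rewrite /A /B -big_split; apply: eq_bigr => u _; rewrite -big_split.
  apply: eq_bigr => v _; rewrite -big_split; apply: eq_bigr => u' _; by rewrite -big_split.
have E1 : A = (N * \sum_u \sum_v \sum_v' ((col u v != col u v') : nat))%N.
  rewrite /A big_distrr; apply: eq_bigr => u _; rewrite big_distrr; apply: eq_bigr => v _.
  by rewrite cN.
have E2 : B = (N * \sum_v' \sum_u \sum_u' ((col u v' != col u' v') : nat))%N.
  rewrite /B.
  transitivity (\sum_u N * \sum_u' \sum_v' ((col u v' != col u' v') : nat))%N.
    by apply: eq_bigr => u _; rewrite cN.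
  rewrite -big_distrr /=; congr (_ * _)%N.
  under eq_bigr => i _ do rewrite exchange_big.
  by rewrite exchange_big.
rewrite E1 E2 card_HL card_HR mulnDr -!mulnA [(2 * (N * _))%N]mulnCA [(2 * (N * \sum_v _))%N]mulnCA.
apply: leq_add; rewrite leq_mul2l; apply/orP; right; rewrite big_distrr /=;
  apply: leq_sum => w _; exact: pairs_le.
Qed.

Local Open Scope ring_scope.

Theorem lemma4p2 (R : realFieldType) (eps : R) (heps : 0 < eps) :
  exists2 delta : R, 0 < delta &
    exists N1 : nat, forall (N0 : nat) (col : bicol_KNN N0),
      (N1 <= N0)%N -> color_balanced eps col ->
      delta * (N0 ^ 3)%:R <= #|HL_edges col|%:R \/
      delta * (N0 ^ 3)%:R <= #|HR_edges col|%:R.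
Proof.
exists (eps ^+ 2 / 4); first by rewrite divr_gt0 // exprn_gt0.
exists 0%N => N col _ /andP [h1 h2].
have K := @key N col.
rewrite /red_density in h1 h2.
move: K h1 h2; set r := num_red col; set hl := #|HL_edges col|; set hr := #|HR_edges col| => K h1 h2.
have rle : (r <= N * N)%N.
  by rewrite /r /num_red; apply: leq_trans (max_card _) _; rewrite card_prod card_ord.
have [N0|Npos] := posnP N.
  move: h1; rewrite N0 muln0 invr0 mulr0 => h1.
  by move: heps; rewrite ltNge h1.
have K' : (r * (N * N - r))%:R <= (2 * N * (hl + hr))%:R :> R by rewrite ler_nat.
rewrite natrM natrB // !natrM natrD in K'.
have nP : 0 < (N%:R : R) by rewrite ltr0n.
have nnP : 0 < (N%:R * N%:R : R) by rewrite mulr_gt0.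
rewrite natrM ler_pdivlMr // in h1.
rewrite natrM ler_pdivrMr // in h2.
rewrite natrX.
set n := (N%:R : R) in K' nP nnP h1 h2 *.
set x := (r%:R : R) in K' h1 h2.
set a := (hl%:R : R) in K' *.
set b := (hr%:R : R) in K' *.
have a0 : 0 <= a by rewrite ler0n.
have b0 : 0 <= b by rewrite ler0n.
have e1 : eps * (n * n) <= n * n - x by lra.
have e2 : (eps * (n * n)) * (eps * (n * n)) <= x * (n * n - x).
  apply: ler_pM => //; rewrite mulr_ge0 // ltW //.
have e3 : n * (eps ^+ 2 * n ^+ 3) <= n * (2 * (a + b)).
  rewrite (_ : n * (eps ^+ 2 * n ^+ 3) = (eps * (n * n)) * (eps * (n * n))); last by ring.
  rewrite (_ : n * (2 * (a + b)) = 2%:R * n * (a + b)); last by ring.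
  exact: le_trans e2 K'.
rewrite ler_pM2l // in e3.
have [hab|hab] := lerP b a; [left|right]; lra.
Qed.
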